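(* For every prime $q$, let $S_q=\{d+q\mathbb{Z}: d\in\mathbb{Z}_{>0},\ d\mid\prod_{p<q}p\}\subseteq(\mathbb{Z}/q\mathbb{Z})^\times$, where the product is over primes $p<q$. Then $\#S_q>\frac12(q-1)$.
   Context: $S_q$ is the set of residue classes modulo $q$ attained by the squarefree positive integers all of whose prime factors are less than $q$. *)

(* Defs.v *)
From mathcomp Require Import all_boot.
Set Implicit Arguments. Unset Strict Implicit. Unset Printing Implicit Defensive.

Definition primorial_below (q : nat) : nat := \prod_(p < q | prime p) p.

(* S_q : the set of residues d mod q of positive divisors d of the product of
   primes below q, represented as a duplicate-free list of naturals in [0, q). *)
Definition Sq (q : nat) : seq nat :=
  undup [seq d %% q | d <- divisors (primorial_below q)].

(* Main.v *)
Require Import Defs.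
From mathcomp Require Import all_boot all_order all_algebra.
From mathcomp Require Import ring lra zify.
Import Order.TTheory GRing.Theory Num.Theory.

Section Aux.
Local Open Scope ring_scope.

Lemma tele (k : nat) :
  \sum_(i < k) (((2*i+5)*(2*i+5))%N%:R : rat)^-1 + ((4*k+8)%N%:R)^-1 <= 8^-1.
Proof.
elim: k => [|k IH]; first by rewrite big_ord0 add0r.
apply: le_trans IH; rewrite big_ord_recr /= -addrA lerD2l.
have E : ((4*k+8)%N%:R : rat)^-1 - ((4*k.+1+8)%N%:R)^-1 = ((k+2)*(4*k+12))%N%:R^-1.
  rewrite !natrM !natrD !natrM.
  rewrite -natr1. field.
  have hk : 0 <= k%:R :> rat by apply: ler0n.
  by apply/and3P; split; rewrite gt_eqF //; lra.
rewrite -(lerBrDr (R:=rat)) E lef_pV2 ?posrE ?ltr0n ?ler_nat; lia.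
Qed.

Lemma sum_bound (n k : nat) :
  (8 * \sum_(i < k) (n %/ ((2*i+5)*(2*i+5))) <= n)%N.
Proof.
rewrite -(ler_nat rat) natrM natr_sum.
have H : \sum_(i < k) ((n %/ ((2*i+5)*(2*i+5)))%:R : rat)
   <= n%:R * \sum_(i < k) (((2*i+5)*(2*i+5))%N%:R : rat)^-1.
  rewrite mulr_sumr; apply: ler_sum => i _.
  rewrite ler_pdivlMr ?ltr0n; last by lia.
  by rewrite -natrM ler_nat leq_divM.
have T := tele k.
have h0 : 0 <= ((4*k+8)%N%:R : rat)^-1 by rewrite invr_ge0 ler0n.
have hn : 0 <= n%:R :> rat by apply: ler0n.
have T' : \sum_(i < k) (((2*i+5)*(2*i+5))%N%:R : rat)^-1 <= 8^-1 by lra.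
have : n%:R * \sum_(i < k) (((2*i+5)*(2*i+5))%N%:R : rat)^-1 <= n%:R * 8^-1.
  by rewrite ler_wpM2l.
move: H; set S := \sum_(i < k) _; set S2 := \sum_(i < k) _ => H1 H2.
have : S <= n%:R / 8 by apply: le_trans H1 H2.
rewrite ler_pdivlMr ?ltr0n // => H3.
have -> : 8%:R * S = S * 8 by rewrite mulrC.
done.
Qed.

End Aux.

Lemma prime_dvd_prim (q p : nat) : prime p -> (p < q)%N -> p %| primorial_below q.
Proof.
move=> pp hpq; rewrite /primorial_below (bigD1 (Ordinal hpq)) //=.
exact: dvdn_mulr.
Qed.

Lemma sf_dvd (q x : nat) : (0 < x)%N -> (x < q)%N ->
  (forall p, prime p -> ~~ (p * p %| x)) -> x %| primorial_below q.
Proof.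
elim: x {-2}x (leqnn x) => [|m IH] x hxm hx0 hxq hsf; first by lia.
case: (ltngtP x 1) => [|h1|->]; [lia| |by rewrite dvd1n].
have [p pp hpx] : exists2 p, prime p & p %| x.
  by exists (pdiv x); [apply: pdiv_prime | apply: pdiv_dvd].
have p1 := prime_gt1 pp.
have Ex : x = p * (x %/ p) by rewrite mulnC divnK.
move: (x %/ p) Ex => y Ex.
have hy0 : (0 < y)%N by move: hx0; rewrite Ex; case: (y) => //; rewrite muln0.
have hyx : (y < x)%N by rewrite Ex -[X in (X < _)%N]mul1n ltn_mul2r hy0.
have hyd : y %| primorial_below q.
  apply: (IH y) => //; [lia|lia|].
  move=> r pr; apply/negP => hr; move: (hsf r pr); rewrite Ex.
  by rewrite (dvdn_trans hr) // dvdn_mull.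
have cp : coprime p y.
  rewrite prime_coprime //; apply/negP => hpy.
  by move: (hsf p pp); rewrite Ex dvdn_pmul2l ?hpy // ltnW.
have hpq : (p < q)%N by apply: leq_ltn_trans (dvdn_leq hx0 hpx) hxq.
by rewrite Ex Gauss_dvd // hyd prime_dvd_prim.
Qed.

Lemma not_sf (q x : nat) : (0 < x)%N -> (x < q)%N -> ~~ (x %| primorial_below q) ->
  exists2 p, prime p & p * p %| x.
Proof.
move=> hx0 hxq hnd.
case: (boolP (has (fun p => prime p && (p * p %| x)) (iota 0 x.+1))).
  by case/hasP => p _ /andP[]; exists p.
move/hasPn => H; case/negP: hnd; apply: sf_dvd => // p pp; apply/negP => hd.
have := H p; rewrite mem_iota pp hd /= => /(_ _)/negP; apply; last done.
have := dvdn_leq hx0 hd; have := prime_gt1 pp; nia.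
Qed.

Lemma count_mult (d n : nat) : (0 < d)%N -> count (fun x => d %| x) (iota 1 n) = n %/ d.
Proof.
move=> hd; elim: n => [|n IH]; first by rewrite div0n.
by rewrite -[n.+1]addn1 iotaD count_cat IH /= addn0 addn1 (divnS _ hd) addnC add1n.
Qed.

Lemma count_le (s : seq nat) (a b c : pred nat) (k : nat) (f : nat -> nat -> bool) :
  (forall x, x \in s -> a x -> [|| b x, c x | [exists i : 'I_k, f i x]]) ->
  (count a s <= count b s + count c s + \sum_(i < k) count (f i) s)%N.
Proof.
elim: s => [|x s IH] H; first by rewrite big1.
rewrite /= (eq_bigr (fun i : 'I_k => f i x + count (f i) s)) // big_split /=.
have IH' := IH (fun y hy => H y (@mem_behead _ (x :: s) _ hy)).
suff : (a x <= b x + c x + \sum_(i < k) f i x)%N by move: IH'; set B := (\sum_(i < k) f i x); set C := (\sum_(i < k) count (f i) s); lia.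
case: (boolP (a x)) => // ax.
have := H x (mem_head _ _) ax.
case/or3P => [->|->|/existsP[i hi]].
- by rewrite /= -!addnA leq_addr.
- by rewrite /= addn1 addSn.
- rewrite (bigD1 i) //= hi /=; set B := \sum_(j < k | _) _; lia.
Qed.

Theorem lemma1 (q : nat) (hq : prime q) : q - 1 < 2 * size (Sq q).
Proof.
set n := q - 1; set P := primorial_below q.
have q1 := prime_gt1 hq.
have P0 : (0 < P)%N.
  rewrite /P /primorial_below; apply: (big_ind (fun m => 0 < m)%N) => //.
    by move=> u v hu hv; rewrite muln_gt0 hu hv.
  by move=> i; apply: prime_gt0.
set A := [seq x <- iota 1 n | x %| P].
have hA : (size A <= size (Sq q))%N.
  apply: uniq_leq_size; first by rewrite filter_uniq // iota_uniq.
  move=> x; rewrite mem_filter mem_iota => /andP[hd /andP[h1 h2]].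
  rewrite /Sq mem_undup; apply/mapP; exists x.
    by rewrite -dvdn_divisors.
  by rewrite modn_small //; lia.
have hc := count_predC (fun x => x %| P) (iota 1 n).
rewrite size_iota in hc.
have hsA : size A = count (fun x => x %| P) (iota 1 n) by rewrite size_filter.
have hb := @count_le (iota 1 n) (predC (fun x => x %| P)) (fun x => 4 %| x) (fun x => 9 %| x) n
  (fun i x => (2*i+5)*(2*i+5) %| x).
have hb' : (count (predC (fun x => x %| P)) (iota 1 n) <=
  n %/ 4 + n %/ 9 + \sum_(i < n) (n %/ ((2*i+5)*(2*i+5))))%N.
  rewrite -!count_mult //.
  rewrite (eq_bigr (fun i : 'I_n => count (fun x => (2*i+5)*(2*i+5) %| x) (iota 1 n))); last first.
    by move=> i _; rewrite count_mult //; lia.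
  apply: hb => x; rewrite mem_iota => /andP[h1 h2] /= hnd.
  have [p pp hp] := @not_sf q x (ltac:(lia)) (ltac:(lia)) hnd.
  case: (even_prime pp) => [E|op].
    by rewrite E in hp; apply/orP; left; exact: hp.
  have p3 := prime_gt1 pp.
  case: (p =P 3) => [E|ne3].
    by rewrite E in hp; apply/orP; right; apply/orP; left; exact: hp.
  have hpx := dvdn_leq (ltac:(lia) : (0 < x)%N) hp.
  have hi : ((p - 5) %/ 2 < n)%N by nia.
  apply/orP; right; apply/orP; right; apply/existsP; exists (Ordinal hi) => /=.
  have -> : (2 * ((p - 5) %/ 2) + 5 = p)%N.
    have hp2 : (p %% 2 = 1)%N by rewrite modn2 op.
    have n4 : p <> 4 by move=> e; rewrite e in op.
    lia.
  done.
have h4 := leq_divM n 4; have h9 := leq_divM n 9.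
have hs := sum_bound n n.
lia.
Qed.
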